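(* Let $I=(T,((U_1,S_1),\dots,(U_k,S_k)))$ be an instance of \textsc{Generalized Graphic Inverse Voronoi in Trees} with $S_i\subseteq W_i$ for all $i$, let $xy\in E_1$ with $x\in W_1$ and $y\in U_1\setminus W_1$, let $\varepsilon>0$, and let $I'$ be the instance obtained from $I$ by expanding the edge $xy$ from $E_1$ by $\varepsilon$. If $\Sigma=\{s_1,\dots,s_k\}$ (with $s_i\in S_i$) is a solution to $I$, then $\Sigma$ is also a solution to $I'$.
   Context: \textsc{Generalized Graphic Inverse Voronoi in Trees}: input is a tree $T$ with positive edge-lengths $\lambda$ and pairs $(U_1,S_1),\dots,(U_k,S_k)$ of subsets of $V(T)$ with $U_1,\dots,U_k$ covering $V(T)$. A solution is $s_1,\dots,s_k\in V(T)$ with $s_i\in S_i$ and $U_i=\mathrm{cell}_T(s_i,\{s_1,\dots,s_k\})$ for all $i$, where $\mathrm{cell}_T(s,\Sigma)=\{x\in V(T)\mid d_T(s,x)\le d_T(s',x)\ \forall s'\in\Sigma\}$ and $d_T$ is the shortest-path distance. For $i\in[k]$, $W_i=U_i\setminus\bigcup_{j\neq i}U_j$ and $E_i=\{uv\in E(T)\mid u\in W_i,\ v\in U_i\setminus W_i\}$. Expansion of $xy\in E_1$ (with $x\in W_1$, $y\in U_1\setminus W_1$) by $\varepsilon$: $T'$ is obtained from $T$ by subdividing $xy$ with a new vertex $y'$, with lengths $\lambda'(xy')=\lambda(xy)$, $\lambda'(yy')=\varepsilon$, and all other edges keeping their lengths; $U_1'$ is the set of vertices of $U_1$ in the component of $T-y$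 containing $x$, together with $y'$; $I'=(T',((U_1',S_1),(U_2,S_2),\dots,(U_k,S_k)))$. *)

(* Defs.v *)
From HB Require Import structures.
From mathcomp Require Import all_boot all_order all_algebra.
From mathcomp Require Import reals.
Set Implicit Arguments. Unset Strict Implicit. Unset Printing Implicit Defensive.
Import Order.TTheory GRing.Theory Num.Theory.
Local Open Scope ring_scope.

Section Defs.
Variable R : realType.
Variable V : finType.

Definition is_tree (e : rel V) : Prop :=
  [/\ symmetric e, irreflexive e,
      (forall u v : V, connect e u v) &
      (forall c : seq V, (3 <= size c)%N -> uniq c -> ~~ cycle e c)].

Definition edge_lengths (e : rel V) (lam : V -> V -> R) : Prop :=
  forall u v : V, e u v -> 0 < lam u v /\ lam u v = lam v u.

Fixpoint walk_len (lam : V -> V -> R) (u : V) (p : seq V) : R :=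
  if p is v :: p' then lam u v + walk_len lam v p' else 0.

(* all simple paths u :: p from u to w (their vertices are pairwise distinct,
   so p has fewer than #|V| elements) *)
Definition simple_paths (e : rel V) (u w : V) : seq (seq V) :=
  flatten [seq [seq p <- [seq tval t | t : n.-tuple V] |
                 [&& path e u p, last u p == w & uniq (u :: p)]]
          | n <- iota 0 #|V|].

(* d_T(u,w): the minimum length of a u-w path (0 if there is none, which
   never happens in a connected graph). Positive lengths make shortest walks
   simple paths, so minimizing over simple paths is the shortest-path distance. *)
Definition dist (e : rel V) (lam : V -> V -> R) (u w : V) : R :=
  match [seq walk_len lam u p | p <- simple_paths e u w] with
  | [::] => 0
  | a :: l => foldr Num.min a l
  end.

Definition cell (e : rel V) (lam : V -> V -> R) (s : V) (Sig : {set V}) : {set V} :=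
  [set z | [forall s' in Sig, dist e lam s z <= dist e lam s' z]].

Definition covers (k : nat) (U : 'I_k -> {set V}) : Prop :=
  \bigcup_(i < k) U i = [set: V].

Definition Wset (k : nat) (U : 'I_k -> {set V}) (i : 'I_k) : {set V} :=
  U i :\: \bigcup_(j < k | j != i) U j.

Definition in_E (e : rel V) (k : nat) (U : 'I_k -> {set V}) (i : 'I_k) (u v : V) : bool :=
  [&& e u v, u \in Wset U i & v \in U i :\: Wset U i].

Definition is_solution (e : rel V) (lam : V -> V -> R) (k : nat)
    (U S : 'I_k -> {set V}) (s : 'I_k -> V) : Prop :=
  forall i : 'I_k, s i \in S i /\ U i = cell e lam (s i) [set s j | j : 'I_k].

End Defs.

(* Vertices of T' : option V, old vertex v is Some v, the new vertex y' is None. *)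
Section Expansion.
Variable R : realType.
Variable V : finType.

Definition exp_rel (e : rel V) (x y : V) : rel (option V) :=
  fun a b => match a, b with
  | Some u, Some v => e u v && ~~ (((u == x) && (v == y)) || ((u == y) && (v == x)))
  | Some u, None => (u == x) || (u == y)
  | None, Some v => (v == x) || (v == y)
  | None, None => false
  end.

(* lambda'(xy') = lambda(xy), lambda'(yy') = eps, other edges unchanged
   (values on non-edges are irrelevant) *)
Definition exp_len (lam : V -> V -> R) (x y : V) (eps : R) : option V -> option V -> R :=
  fun a b => match a, b with
  | Some u, Some v => lam u v
  | Some u, None | None, Some u =>
      if u == x then lam x y else if u == y then eps else 0
  | None, None => 0
  end.

Definition del_rel (e : rel V) (y : V) : rel V :=
  [rel a b | [&& e a b, a != y & b != y]].

Definition exp_U (e : rel V) (x y : V) (k : nat) (U : 'I_k -> {set V}) (i0 : 'I_k)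
    : 'I_k -> {set option V} :=
  fun i => if i == i0 then
             None |: [set Some v | v in [set v in U i0 | connect (del_rel e y) x v]]
           else [set Some v | v in U i].

Definition exp_S (k : nat) (S : 'I_k -> {set V}) : 'I_k -> {set option V} :=
  fun i => [set Some v | v in S i].

End Expansion.

(* Main.v *)
Require Import Defs.
From HB Require Import structures.
From mathcomp Require Import all_boot all_order all_algebra.
From mathcomp Require Import reals.
From mathcomp Require Import lra.
Import Order.TTheory GRing.Theory Num.Theory.
Local Open Scope ring_scope.

Section Gen.
Local Set Implicit Arguments. Local Unset Strict Implicit.
Variable R : realType.
Variable W : finType.
Variable r : rel W.
Variable l : W -> W -> R.

Definition simple (u w : W) (p : seq W) : bool :=
  [&& path r u p, last u p == w & uniq (u :: p)].

Lemma mem_sp u w p : (p \in simple_paths r u w) = simple u w p.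
Proof.
rewrite /simple_paths /simple. apply/flatten_mapP/idP.
- move=> [n _]. rewrite mem_filter => /andP [H _]. exact H.
- move=> H. exists (size p).
    rewrite mem_iota add0n /=.
    case/and3P: H => _ _ /card_uniqP Hu.
    have := max_card (mem (u :: p)). by rewrite Hu.
  rewrite mem_filter H /=. apply/mapP. exists (in_tuple p) => //. by rewrite mem_enum.
Qed.

Lemma walk_len_cat u p q :
  walk_len l u (p ++ q) = walk_len l u p + walk_len l (last u p) q.
Proof. elim: p u => [|a p IH] u /=; first by rewrite add0r. by rewrite IH addrA. Qed.

Hypothesis lpos : forall a b, r a b -> 0 <= l a b.

Lemma walk_len_ge0 u p : path r u p -> 0 <= walk_len l u p.
Proof.
elim: p u => [|a p IH] u //= /andP [Ha Hp]. by rewrite addr_ge0 // ?lpos // IH.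
Qed.

Lemma foldr_min_le (a : R) s z : z \in a :: s -> foldr Num.min a s <= z.
Proof.
elim: s => [|b s IH] /=; first by rewrite inE => /eqP ->.
rewrite !inE => /orP [/eqP Hz|/orP [/eqP Hz|H]].
- rewrite ge_min; apply/orP; right; apply: IH; by rewrite Hz mem_head.
- by rewrite Hz ge_min lexx.
- rewrite ge_min; apply/orP; right; apply: IH; by rewrite inE H orbT.
Qed.

Lemma dist_le_simple u w p : simple u w p -> dist r l u w <= walk_len l u p.
Proof.
move=> H. rewrite /dist.
have : walk_len l u p \in [seq walk_len l u p0 | p0 <- simple_paths r u w].
  apply/mapP; exists p => //; by rewrite mem_sp.
case: [seq _ | _ <- _] => [//|a s] Hin. exact: foldr_min_le.
Qed.

Lemma shorten_len u p : path r u p ->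
  exists q, simple u (last u p) q /\ walk_len l u q <= walk_len l u p.
Proof.
elim: p u => [|a p IH] u /=.
  move=> _; exists [::]; by rewrite /simple /= eqxx.
move=> /andP [Hua Hp]. have [q [/and3P [Hq /eqP Hl Hu] Hlen]] := IH a Hp.
have Hle : walk_len l a q <= l u a + walk_len l a p.
  by rewrite -[X in X <= _]add0r lerD // lpos.
case: (eqVneq u a) => [Eua|Nua].
  subst a. exists q; split => //; first by rewrite /simple Hq Hl eqxx.
case Hin: (u \in q).
  case/splitPr: Hin Hq Hl Hu Hlen Hle => q1 q2 Hq Hl Hu Hlen Hle.
  exists q2. rewrite cat_path /= in Hq. case/and3P: Hq => Hq1 He Hq2.
  rewrite last_cat /= in Hl.
  split. rewrite /simple Hq2 Hl eqxx /=.
    move: Hu; rewrite -cat_cons cat_uniq => /and3P [_ _]. done.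
  apply: le_trans Hle. rewrite walk_len_cat /=.
  rewrite addrA -[X in X <= _]add0r lerD //.
  by rewrite addr_ge0 // ?lpos // walk_len_ge0.
exists (a :: q). split.
  rewrite /simple /= Hua Hq /= Hl eqxx /=. rewrite inE Hin negb_or Nua /=. done.
by rewrite /= lerD.
Qed.

Lemma dist_le_walk u p : path r u p -> dist r l u (last u p) <= walk_len l u p.
Proof.
move=> /shorten_len [q [Hs Hq]]. apply: le_trans; [exact: (dist_le_simple Hs) | exact: Hq].
Qed.

Lemma foldr_min_all (m a : R) s : all (eq_op^~ m) (a :: s) -> foldr Num.min a s = m.
Proof.
elim: s => [|b s IH] /=; first by rewrite andbT => /eqP.
move=> /and3P [Ha /eqP Hb Hs]. rewrite IH; last by rewrite /= Ha Hs. rewrite Hb. exact: minxx.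
Qed.

Lemma dist_all u w p m : simple u w p ->
  (forall q, simple u w q -> walk_len l u q = m) -> dist r l u w = m.
Proof.
move=> Hp Hall. rewrite /dist.
have Hin : walk_len l u p \in [seq walk_len l u p0 | p0 <- simple_paths r u w].
  apply/mapP; exists p => //; by rewrite mem_sp.
have : all (eq_op^~ m) [seq walk_len l u p0 | p0 <- simple_paths r u w].
  apply/allP => z /mapP [q Hq ->]. rewrite mem_sp in Hq. by rewrite Hall.
move: Hin. case: [seq _ | _ <- _] => [//|a s] _. exact: foldr_min_all.
Qed.

Lemma simple_exists u w : connect r u w -> exists p, simple u w p.
Proof.
move=> /connectP [p Hp ->]. case: (shortenP Hp) => q Hq Hu _.
exists q. by rewrite /simple Hq Hu eqxx.
Qed.

Hypothesis Ht : is_tree r.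

Lemma tree_sym : symmetric r.
Proof. by case: Ht. Qed.

Lemma no_cycle c : (3 <= size c)%N -> uniq c -> cycle r c -> False.
Proof. case: Ht => _ _ _ H Hs Hu Hc. by move: (H c Hs Hu); rewrite Hc. Qed.

Lemma cycle_from u A z B :
  path r u (rcons A z) -> path r u (rcons B z) ->
  uniq (u :: rcons A z ++ rev B) -> (3 <= (size A + size B).+2)%N -> False.
Proof.
move=> HA HB Hu Hs. apply: (@no_cycle (u :: rcons A z ++ rev B)) => //.
  by rewrite /= size_cat size_rcons size_rev addSn.
rewrite /= rcons_cat cat_path HA last_rcons.
have := rev_path r u (rcons B z). rewrite last_rcons belast_rcons rev_cons => ->.
move: HB. apply: sub_path => a b /=. by rewrite tree_sym.
Qed.

Lemma tree_uniq u w p q : simple u w p -> simple u w q -> p = q.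
Proof.
elim: p u q => [|a p IH] u q.
  case: q => [//|b q]. rewrite /simple => /and3P [_ /eqP <- _] /and3P [_ Hl Hu].
  exfalso. move: Hu. rewrite /= => /andP [Hn _]. move: Hn.
  have := mem_last b q. move: Hl => /= /eqP ->. by move=> ->.
case: q => [|b q].
  rewrite /simple => /and3P [_ Hl Hu] /and3P [_ /eqP Hw _].
  exfalso. move: Hu. rewrite /= => /andP [Hn _]. move: Hn.
  have := mem_last a p. move: Hl => /= /eqP ->. rewrite -Hw. by move=> ->.
move=> Hp Hq. case: (eqVneq a b) => [Eab|Nab].
  subst b. congr cons. apply: (IH a).
    case/and3P: Hp => /= /andP [_ H1] H2 /andP [_ H3]; by rewrite /simple H1 H2 /= H3.
  case/and3P: Hq => /= /andP [_ H1] H2 /andP [_ H3]; by rewrite /simple H1 H2 /= H3.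
exfalso.
case/and3P: Hp => HP /eqP HlP HuP. case/and3P: Hq => HQ /eqP HlQ HuQ.
set P := a :: p in HP HlP HuP. set Q := b :: q in HQ HlQ HuQ.
have wP : w \in P by rewrite -HlP /P /= mem_last.
have wQ : w \in Q by rewrite -HlQ /Q /= mem_last.
have hasQP : has (mem Q) P by apply/hasP; exists w.
set i := find (mem Q) P.
have iP : (i < size P)%N by rewrite -has_find.
set z := nth u P i.
have zQ : z \in Q by have := nth_find u hasQP.
set j := index z Q.
have jQ : (j < size Q)%N by rewrite index_mem.
have HtP : take i.+1 P = rcons (take i P) z by rewrite (take_nth u iP).
have HtQ : take j.+1 Q = rcons (take j Q) z by rewrite (take_nth u jQ) nth_index.
have pathtake : forall S n, path r u S -> path r u (take n S).
  move=> S n. rewrite -{1}(cat_take_drop n S) cat_path. by case/andP.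
apply: (@cycle_from u (take i P) z (take j Q)).
- rewrite -HtP. exact: pathtake.
- rewrite -HtQ. exact: pathtake.
- rewrite cons_uniq mem_cat mem_rcons mem_rev inE negb_or.
  have uP : u \notin P := proj1 (andP HuP). have {}HuP : uniq P := proj2 (andP HuP). have uQ : u \notin Q := proj1 (andP HuQ). have {}HuQ : uniq Q := proj2 (andP HuQ).
  rewrite -andbA; apply/and3P; split.
  + rewrite negb_or; apply/andP; split.
      apply/eqP => Euz. move: uQ. by rewrite Euz zQ.
    apply/negP => /mem_take. by rewrite (negbTE uP).
  + apply/negP => /mem_take. by rewrite (negbTE uQ).
  + rewrite cat_uniq rcons_uniq rev_uniq; apply/and3P; split.
    * rewrite take_uniq // andbT. have := take_uniq i.+1 HuP.
      by rewrite HtP rcons_uniq => /andP [].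
    * apply/hasPn => v. rewrite mem_rev => vB. rewrite mem_rcons inE.
      apply/negP => /orP [/eqP Evz|vA].
        move: vB. by rewrite Evz in_take // ltnn.
      have : has (mem Q) (take i P).
        apply/hasP; exists v => //. exact: mem_take vB.
      by rewrite has_take // ltnn.
    * exact: take_uniq.
- rewrite size_take size_take iP jQ.
  rewrite ltnS ltnS addn_gt0. case: (ltnP 0 i) => Hi; first by apply/orP; left. have Hi0 : i = 0%N by apply/eqP; rewrite -leqn0.
  have Eza : z = a by rewrite /z Hi0.
  rewrite /j Eza /Q /= eq_sym. by rewrite (negbTE Nab).
Qed.

Lemma dist_tree u w p : simple u w p -> dist r l u w = walk_len l u p.
Proof.
move=> Hp. apply: (dist_all Hp) => q Hq. by rewrite (tree_uniq Hq Hp).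
Qed.

Lemma tree_conn u w : exists p, simple u w p.
Proof. apply: simple_exists. by case: Ht. Qed.

Lemma dist_ge0 u w : 0 <= dist r l u w.
Proof.
have [p Hp] := tree_conn u w. rewrite (dist_tree Hp).
apply: walk_len_ge0. by case/and3P: Hp.
Qed.

Lemma dist_tri a b c : dist r l a c <= dist r l a b + dist r l b c.
Proof.
have [p Hp] := tree_conn a b. have [q Hq] := tree_conn b c.
rewrite (dist_tree Hp) (dist_tree Hq).
case/and3P: Hp => Hp /eqP Hlp _. case/and3P: Hq => Hq /eqP Hlq _.
have := dist_le_walk (u:=a) (p := p ++ q).
rewrite last_cat Hlp Hlq walk_len_cat Hlp. apply. by rewrite cat_path Hp Hlp.
Qed.

Lemma dist_self u : dist r l u u = 0.
Proof. by rewrite (@dist_tree u u [::]) // /simple /= eqxx. Qed.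

End Gen.

Section Spec.
Local Set Implicit Arguments. Local Unset Strict Implicit.
Variable R : realType.
Variable V : finType.
Variable e : rel V.
Variable lam : V -> V -> R.
Variables x y : V.
Variable eps : R.
Hypothesis Ht : is_tree e.
Hypothesis Hlam : edge_lengths e lam.
Hypothesis Exy : e x y.
Hypothesis Heps : 0 < eps.

Definition D := del_rel e y.
Definition inX v := connect D x v.
Definition e' := exp_rel e x y.
Definition lam' := exp_len lam x y eps.

Lemma esym : symmetric e. Proof. by case: Ht. Qed.
Lemma eirr : irreflexive e. Proof. by case: Ht. Qed.
Lemma xy_neq : x != y.
Proof. apply/eqP => E. move: Exy. by rewrite E eirr. Qed.
Lemma yx_neq : (y == x) = false.
Proof. by rewrite eq_sym (negbTE xy_neq). Qed.

Lemma lpos : forall a b, e a b -> 0 <= lam a b.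
Proof. move=> a b /Hlam [H _]. exact: ltW. Qed.

Lemma lamyx : lam y x = lam x y.
Proof. by case: (Hlam Exy). Qed.

Lemma Dsym : symmetric D.
Proof.
move=> a b. rewrite /D /del_rel /=.
apply/idP/idP => /and3P [H1 H2 H3]; apply/and3P; split => //; by rewrite esym.
Qed.

Lemma Dsub : subrel D e.
Proof. by move=> a b /and3P []. Qed.

Lemma Dconn_sym a b : connect D a b = connect D b a.
Proof. exact: (sym_connect_sym Dsym). Qed.

Lemma Dpath_ny u p : path D u p -> forall v, v \in p -> v != y.
Proof.
elim: p u => [|c p IH] u //= /andP [/and3P [_ _ Hc] Hp] v.
rewrite inE => /orP [/eqP ->//|]. exact: IH Hp v.
Qed.

Lemma Dconn_y u : connect D u y -> u = y.
Proof.
move=> /connectP [p Hp Hl]. case: p Hp Hl => [|c p] Hp Hl //.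
have := Dpath_ny Hp (mem_last c p). move: Hl => /= <-. by rewrite eqxx.
Qed.

Lemma xX : inX x. Proof. exact: connect0. Qed.
Lemma yX : ~~ inX y.
Proof. apply/negP => /Dconn_y E. move: xy_neq. by rewrite E eqxx. Qed.

Lemma inX_ny v : inX v -> v != y.
Proof. move=> H; apply/eqP => E; move: H; rewrite E. by rewrite (negbTE yX). Qed.

Lemma Dpath_avoid u p : path e u p -> (forall v, v \in u :: p -> v != y) -> path D u p.
Proof.
elim: p u => [|c p IH] u //= /andP [Hc Hp] Hv.
rewrite IH //; last by move=> v Hin; apply: Hv; rewrite inE Hin orbT.
rewrite /D /del_rel /= Hc Hv ?mem_head // Hv //. by rewrite !inE eqxx orbT.
Qed.

Lemma pathX a b : inX a -> inX b ->
  exists p, simple e a b p /\ all inX (a :: p).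
Proof.
move=> Ha Hb. have : connect D a b.
  apply: connect_trans Hb. by rewrite Dconn_sym.
move=> /simple_exists [p /and3P [Hp Hl Hu]]. exists p; split.
  by rewrite /simple Hl Hu (sub_path Dsub Hp).
apply/allP => v Hv. apply: connect_trans Ha _. exact: path_connect Hp v Hv.
Qed.

Lemma pathYfrom b : ~~ inX b ->
  exists p, simple e y b p /\ all (fun v => ~~ inX v) (y :: p).
Proof.
move=> Hb. have [p Hs] := tree_conn Ht y b. exists p; split => //.
case/and3P: Hs => Hp /eqP Hl Hu.
case: p Hp Hl Hu => [|c p] Hp Hl Hu; first by rewrite /= yX.
move: Hp => /= /andP [_ Hp]. move: Hu => /= /andP [Hyn Hu].
have HD : path D c p.
  apply: (Dpath_avoid Hp) => v Hv. apply/eqP => E. move: Hyn. by rewrite -E Hv.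
change (~~ inX y && all (fun v => ~~ inX v) (c :: p)). rewrite yX andTb. apply/allP => v Hv. apply/negP => HvX.
have Hcb : connect D c b by rewrite -Hl; exact: path_connect HD _ (mem_last c p).
have Hcv : connect D c v by exact: path_connect HD v Hv.
move: Hb. rewrite /inX. apply/negP/negPn. apply: connect_trans HvX _.
apply: connect_trans Hcb. by rewrite Dconn_sym.
Qed.

Lemma pathYto a : ~~ inX a ->
  exists p, simple e a y p /\ all (fun v => ~~ inX v) (a :: p).
Proof.
move=> Ha. have [p Hs] := tree_conn Ht a y. exists p; split => //.
case/and3P: Hs => Hp /eqP Hl Hu.
case/lastP: p Hp Hl Hu => [|B z] Hp Hl Hu; first by rewrite /= Ha.
rewrite last_rcons in Hl. subst z.
move: Hp; rewrite rcons_path => /andP [Hp _].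
have Hu' : uniq (rcons (a :: B) y) by [].
rewrite rcons_uniq in Hu'. case/andP: Hu' => Hyn _.
have HD : path D a B.
  apply: (Dpath_avoid Hp) => v Hv. apply/eqP => E. move: Hyn. by rewrite -E Hv.
apply/allP => v. rewrite -rcons_cons mem_rcons inE => /orP [/eqP ->|Hv].
  exact: yX.
apply/negP => HvX. move: Ha => /negP; apply.
apply: connect_trans HvX _. rewrite Dconn_sym. exact: path_connect HD v Hv.
Qed.

Lemma pathY a b : ~~ inX a -> ~~ inX b ->
  exists p, simple e a b p /\ all (fun v => ~~ inX v) (a :: p).
Proof.
move=> Ha Hb. have [p1 [/and3P [Hp1 /eqP Hl1 _] A1]] := pathYto Ha.
have [p2 [/and3P [Hp2 /eqP Hl2 _] A2]] := pathYfrom Hb.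
have Hp : path e a (p1 ++ p2) by rewrite cat_path Hp1 Hl1.
have : last a (p1 ++ p2) = b by rewrite last_cat Hl1 Hl2.
case: (shortenP Hp) => q Hq Hu Hsub Hlq.
exists q; split.
  by rewrite /simple Hq Hu Hlq eqxx.
change (~~ inX a && all (fun v => ~~ inX v) q). rewrite Ha andTb. apply/allP => v /Hsub. rewrite mem_cat => /orP [H|H].
  by move/allP: A1; apply; rewrite inE H orbT.
by move/allP: A2; apply; rewrite inE H orbT.
Qed.

Lemma lift_path u p : path e u p ->
  all (fun v => v != x) (u :: p) || all (fun v => v != y) (u :: p) ->
  path e' (Some u) (map Some p).
Proof.
elim: p u => [|c p IH] u //= /andP [Hc Hp] H.
apply/andP; split.
  rewrite /e' /exp_rel Hc /=.
  move: H => /orP [/and3P [Hu Hc' _]|/and3P [Hu Hc' _]];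
  by rewrite (negbTE Hu) (negbTE Hc') /= ?andbF.
apply: (IH c Hp). move: H => /orP [/andP [_ H]|/andP [_ H]]; apply/orP; [left|right]; exact: H.
Qed.

Lemma wlen_lift u p : walk_len lam' (Some u) (map Some p) = walk_len lam u p.
Proof. elim: p u => [|c p IH] u //=. by rewrite IH. Qed.

Lemma unlift_path u p : path e' (Some u) (map Some p) -> path e u p.
Proof.
elim: p u => [|c p IH] u //= /andP [Hc Hp]. rewrite IH // andbT.
by move: Hc; rewrite /e' /exp_rel => /andP [].
Qed.

Lemma uniq_lift (s : seq V) : uniq (map Some s) = uniq s.
Proof. exact: (map_inj_uniq Some_inj). Qed.

Lemma simple_lift u w p : simple e u w p ->
  all (fun v => v != x) (u :: p) || all (fun v => v != y) (u :: p) ->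
  simple e' (Some u) (Some w) (map Some p).
Proof.
move=> /and3P [Hp /eqP Hl Hu] H. rewrite /simple lift_path // last_map Hl eqxx /=.
have := Hu; rewrite -(uniq_lift (u :: p)); exact.
Qed.

Lemma allX_ny s : all inX s -> all (fun v => v != y) s.
Proof. move=> /allP H. apply/allP => v /H. exact: inX_ny. Qed.

Lemma allY_nx s : all (fun v => ~~ inX v) s -> all (fun v => v != x) s.
Proof.
move=> /allP H. apply/allP => v /H Hv. apply/eqP => E. move: Hv. by rewrite E xX.
Qed.

Lemma disjXY (s1 s2 : seq V) : all inX s1 -> all (fun v => ~~ inX v) s2 ->
  ~~ has (mem (map Some s1)) (None :: map Some s2).
Proof.
move=> /allP H1 /allP H2. rewrite /= negb_or. apply/andP; split.
  by apply/mapP => -[].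
apply/hasPn => o /mapP [v Hv ->]. rewrite /= (mem_map Some_inj).
apply/negP => /H1. by rewrite (negbTE (H2 v Hv)).
Qed.

Lemma disj_gen (s1 s2 : seq V) : (forall v, v \in s1 -> v \in s2 -> False) ->
  ~~ has (mem (map Some s1)) (None :: map Some s2).
Proof.
move=> H. rewrite /= negb_or. apply/andP; split.
  by apply/mapP => -[].
apply/hasPn => o /mapP [v Hv ->]. rewrite /= (mem_map Some_inj).
apply/negP => Hv1. exact: H Hv1 Hv.
Qed.

Lemma crossXY a b : inX a -> ~~ inX b ->
  exists P', simple e' (Some a) (Some b) P' /\
    walk_len lam' (Some a) P' = dist e lam a b + eps /\
    dist e lam a b = dist e lam a x + lam x y + dist e lam y b.
Proof.
move=> Ha Hb.
have [p1 [Hs1 A1]] := pathX Ha xX. have [p2 [Hs2 A2]] := pathYfrom Hb.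
have Hs1' := Hs1. have Hs2' := Hs2.
case/and3P: Hs1' => Hp1 /eqP Hl1 Hu1. case/and3P: Hs2' => Hp2 /eqP Hl2 Hu2.
have HS : simple e a b (p1 ++ y :: p2).
  rewrite /simple; apply/and3P; split.
  - by rewrite cat_path Hp1 Hl1 /= Exy Hp2.
  - by rewrite last_cat Hl1 /= Hl2.
  have -> : a :: p1 ++ y :: p2 = (a :: p1) ++ (y :: p2) by [].
  rewrite cat_uniq Hu1 Hu2 andbT. apply/hasPn => v Hv.
  apply/negP => Hv1. move/allP: A1 => /(_ v Hv1). move/allP: A2 => /(_ v Hv).
  by move=> /negbTE ->.
have Ed : dist e lam a b = dist e lam a x + lam x y + dist e lam y b.
  rewrite (dist_tree lam Ht HS) (dist_tree lam Ht Hs1) (dist_tree lam Ht Hs2).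
  by rewrite walk_len_cat Hl1 /= addrA.
exists (map Some p1 ++ None :: Some y :: map Some p2). split; last split => //.
- rewrite /simple; apply/and3P; split.
  + have Hxn : e' (Some x) None by rewrite /e' /exp_rel /= eqxx.
    have Hny : e' None (Some y) by rewrite /e' /exp_rel /= eqxx orbT.
    rewrite cat_path last_map Hl1 (lift_path Hp1); last by rewrite (allX_ny A1) orbT.
    rewrite andTb. change (e' (Some x) None && (e' None (Some y) && path e' (Some y) (map Some p2))). rewrite Hxn Hny /=. apply: (lift_path Hp2). by rewrite (allY_nx A2).
  + by rewrite last_cat last_map Hl1 /= last_map Hl2.
  have -> : Some a :: map Some p1 ++ None :: Some y :: map Some p2
     = map Some (a :: p1) ++ None :: map Some (y :: p2) by [].
  rewrite cat_uniq uniq_lift Hu1 disjXY //=.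
  rewrite (_ : Some y :: map Some p2 = map Some (y :: p2)) //. apply/andP; split; first by apply/mapP => -[]. have := Hu2; rewrite -(uniq_lift (y :: p2)); exact.
- rewrite walk_len_cat last_map Hl1 wlen_lift /= wlen_lift.
  rewrite Ed (dist_tree lam Ht Hs1) (dist_tree lam Ht Hs2) /lam' /exp_len eqxx yx_neq eqxx.
  rewrite -!addrA. congr (_ + _). congr (_ + _). by rewrite addrC.
Qed.

Lemma crossYX a b : ~~ inX a -> inX b ->
  exists P', simple e' (Some a) (Some b) P' /\
    walk_len lam' (Some a) P' = dist e lam a b + eps /\
    dist e lam a b = dist e lam a y + lam x y + dist e lam x b.
Proof.
move=> Ha Hb.
have [p1 [Hs1 A1]] := pathYto Ha. have [p2 [Hs2 A2]] := pathX xX Hb.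
have Hs1' := Hs1. have Hs2' := Hs2.
case/and3P: Hs1' => Hp1 /eqP Hl1 Hu1. case/and3P: Hs2' => Hp2 /eqP Hl2 Hu2.
have HS : simple e a b (p1 ++ x :: p2).
  rewrite /simple; apply/and3P; split.
  - by rewrite cat_path Hp1 Hl1 /= esym Exy Hp2.
  - by rewrite last_cat Hl1 /= Hl2.
  have -> : a :: p1 ++ x :: p2 = (a :: p1) ++ (x :: p2) by [].
  rewrite cat_uniq Hu1 Hu2 andbT. apply/hasPn => v Hv.
  apply/negP => Hv1. move/allP: A1 => /(_ v Hv1). move/allP: A2 => /(_ v Hv).
  by move=> ->.
have Ed : dist e lam a b = dist e lam a y + lam x y + dist e lam x b.
  rewrite (dist_tree lam Ht HS) (dist_tree lam Ht Hs1) (dist_tree lam Ht Hs2).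
  by rewrite walk_len_cat Hl1 /= addrA lamyx.
exists (map Some p1 ++ None :: Some x :: map Some p2). split; last split => //.
- rewrite /simple; apply/and3P; split.
  + have Hyn : e' (Some y) None by rewrite /e' /exp_rel /= eqxx orbT.
    have Hnx : e' None (Some x) by rewrite /e' /exp_rel /= eqxx.
    rewrite cat_path last_map Hl1 (lift_path Hp1); last by rewrite (allY_nx A1).
    rewrite andTb. change (e' (Some y) None && (e' None (Some x) && path e' (Some x) (map Some p2))). rewrite Hyn Hnx /=. apply: (lift_path Hp2). by rewrite (allX_ny A2) orbT.
  + by rewrite last_cat last_map Hl1 /= last_map Hl2.
  have -> : Some a :: map Some p1 ++ None :: Some x :: map Some p2
     = map Some (a :: p1) ++ None :: map Some (x :: p2) by [].
  rewrite cat_uniq uniq_lift Hu1 disj_gen /=; last first.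
    move=> v Hv1 Hv. move/allP: A1 => /(_ v Hv1). by move/allP: A2 => /(_ v Hv) ->.
  rewrite (_ : Some x :: map Some p2 = map Some (x :: p2)) //. apply/andP; split; first by apply/mapP => -[]. have := Hu2; rewrite -(uniq_lift (x :: p2)); exact.
- rewrite walk_len_cat last_map Hl1 wlen_lift /= wlen_lift.
  rewrite Ed (dist_tree lam Ht Hs1) (dist_tree lam Ht Hs2) /lam' /exp_len eqxx yx_neq eqxx.
  rewrite -!addrA. congr (_ + _). rewrite [eps + _]addrC. by rewrite -addrA.
Qed.

Lemma sameX a b : inX a -> inX b ->
  exists P', simple e' (Some a) (Some b) P' /\ walk_len lam' (Some a) P' = dist e lam a b.
Proof.
move=> Ha Hb. have [p [Hs A]] := pathX Ha Hb. exists (map Some p); split.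
  apply: simple_lift Hs _. by rewrite (allX_ny A) orbT.
by rewrite wlen_lift (dist_tree lam Ht Hs).
Qed.

Lemma sameY a b : ~~ inX a -> ~~ inX b ->
  exists P', simple e' (Some a) (Some b) P' /\ walk_len lam' (Some a) P' = dist e lam a b.
Proof.
move=> Ha Hb. have [p [Hs A]] := pathY Ha Hb. exists (map Some p); split.
  apply: simple_lift Hs _. by rewrite (allY_nx A).
by rewrite wlen_lift (dist_tree lam Ht Hs).
Qed.

Lemma noneX a : inX a ->
  exists P', simple e' (Some a) None P' /\ walk_len lam' (Some a) P' = dist e lam a x + lam x y.
Proof.
move=> Ha. have [p [Hs A]] := pathX Ha xX. have Hs' := Hs.
case/and3P: Hs' => Hp /eqP Hl Hu.
exists (map Some p ++ [:: None]); split.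
  rewrite /simple; apply/and3P; split.
  - rewrite cat_path last_map Hl (lift_path Hp); last by rewrite (allX_ny A) orbT.
    by rewrite /= /e' /exp_rel eqxx.
  - by rewrite last_cat.
  have -> : Some a :: map Some p ++ [:: None] = map Some (a :: p) ++ [:: None] by [].
  rewrite cat_uniq uniq_lift Hu /= andbT orbF. by apply/mapP => -[].
rewrite walk_len_cat last_map Hl wlen_lift /= (dist_tree lam Ht Hs).
by rewrite /lam' /exp_len eqxx addr0.
Qed.

Lemma noneY a : ~~ inX a ->
  exists P', simple e' (Some a) None P' /\ walk_len lam' (Some a) P' = dist e lam a y + eps.
Proof.
move=> Ha. have [p [Hs A]] := pathYto Ha. have Hs' := Hs.
case/and3P: Hs' => Hp /eqP Hl Hu.
exists (map Some p ++ [:: None]); split.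
  rewrite /simple; apply/and3P; split.
  - rewrite cat_path last_map Hl (lift_path Hp); last by rewrite (allY_nx A).
    by rewrite /= /e' /exp_rel eqxx orbT.
  - by rewrite last_cat.
  have -> : Some a :: map Some p ++ [:: None] = map Some (a :: p) ++ [:: None] by [].
  rewrite cat_uniq uniq_lift Hu /= andbT orbF. by apply/mapP => -[].
rewrite walk_len_cat last_map Hl wlen_lift /= (dist_tree lam Ht Hs).
by rewrite /lam' /exp_len yx_neq eqxx addr0.
Qed.

Lemma noneP (c : seq (option V)) : None \notin c -> exists c0, c = map Some c0.
Proof.
elim: c => [|[a|] c IH]; first by exists [::].
  rewrite in_cons negb_or => /andP [_ /IH [c0 ->]]. by exists (a :: c0).
by rewrite in_cons eqxx.
Qed.

Lemma simple_conn (W : finType) (r : rel W) u w p : simple r u w p -> connect r u w.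
Proof. move=> /and3P [Hp /eqP Hl _]. apply/connectP. by exists p. Qed.

Lemma e'sym : symmetric e'.
Proof.
move=> [a|] [b|] //=; rewrite /e' /exp_rel esym.
by case: (a == x); case: (b == y); case: (a == y); case: (b == x).
Qed.

Lemma tree' : is_tree e'.
Proof.
split.
- exact: e'sym.
- move=> [a|] //=. by rewrite /e' /exp_rel eirr.
- have Hx : forall A, connect e' (Some x) A.
    move=> [a|]; last by apply: connect1; rewrite /e' /exp_rel eqxx.
    case Ha: (inX a).
      have [P [HP _]] := sameX xX Ha. exact: simple_conn HP.
    have [P [HP _]] := crossXY xX (negbT Ha). exact: simple_conn HP.
  move=> A B. apply: connect_trans (Hx B). by rewrite (sym_connect_sym e'sym).
- move=> c Hs Hu; apply/negP => Hc.
  case Hn: (None \in c); last first.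
    have [c0 E] := noneP (negbT Hn). subst c. clear Hn.
    case: c0 Hs Hu Hc => [//|a c1] Hs Hu Hc.
    apply: (@no_cycle _ _ Ht (a :: c1)).
    + by rewrite size_map in Hs.
    + by rewrite uniq_lift in Hu.
    + move: Hc => /=. rewrite -(map_rcons Some). exact: unlift_path.
  case: (rot_to Hn) => i c' Hrot.
  have Hs' : (3 <= size (None :: c'))%N by rewrite -Hrot size_rot.
  have Hu' : uniq (None :: c') by rewrite -Hrot rot_uniq.
  have Hc' : cycle e' (None :: c') by rewrite -Hrot rot_cycle.
  move: Hu' => /andP [Hn' Hu'].
  have [c0 E] := noneP Hn'. subst c'. clear Hn' Hrot Hn Hs Hu Hc.
  case: c0 Hs' Hu' Hc' => [//|a [//|b c2]] Hs' Hu' Hc'.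
  set c1 := b :: c2.
  have Hc2 : e' None (Some a) && path e' (Some a) (rcons (map Some c1) None) := Hc'.
  move: Hc2 => /andP [Ha]. rewrite rcons_path last_map.
  move=> /andP [Hp' Hz].
  have Hp := unlift_path Hp'.
  set z := last a c1 in Hz.
  have Hzc : z \in c1 by rewrite /z /c1 /= mem_last.
  have Hu1 : uniq (a :: c1) by rewrite -uniq_lift.
  have Naz : a != z.
    apply/eqP => E. move: Hu1 => /andP [H _]. by rewrite E Hzc in H.
  move: Ha Hz; rewrite /e' /exp_rel => Ha Hz.
  have Hxy : ((a == x) && (z == y)) || ((a == y) && (z == x)).
    move: Naz. case/orP: Ha => /eqP ->; case/orP: Hz => /eqP ->;
    by rewrite ?eqxx ?orbT.
  have Hza : e z a.
    by case/orP: Hxy => /andP [/eqP -> /eqP ->]; rewrite ?Exy // esym.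
  clear Ha Hz Hc'. case: c2 @c1 @z Hs' Hu' Hp Hp' Hzc Hu1 Naz Hxy Hza => [|b' c3] c1 z Hs' Hu' Hp Hp' Hzc Hu1 Naz Hxy Hza.
    move: Hp' Hxy. rewrite /z /c1 /= /e' /exp_rel andbT => /andP [_ /negP H] Hxy.
    by apply: H; case/orP: Hxy => /andP [-> ->]; rewrite ?orbT.
  apply: (@no_cycle _ _ Ht (a :: c1)) => //.
  change (path e a (rcons c1 a)). rewrite rcons_path Hp andTb. exact: Hza.
Qed.

Notation d := (dist e lam).
Notation d' := (dist e' lam').
Notation la := (lam x y).

Lemma la_pos : 0 < la. Proof. by case: (Hlam Exy). Qed.

Lemma dF1X a b : inX a -> inX b -> d' (Some a) (Some b) = d a b.
Proof. move=> Ha Hb. have [P [HP E]] := sameX Ha Hb. by rewrite (dist_tree lam' tree' HP). Qed.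
Lemma dF1Y a b : ~~ inX a -> ~~ inX b -> d' (Some a) (Some b) = d a b.
Proof. move=> Ha Hb. have [P [HP E]] := sameY Ha Hb. by rewrite (dist_tree lam' tree' HP). Qed.
Lemma dF2XY a b : inX a -> ~~ inX b -> d' (Some a) (Some b) = d a b + eps.
Proof. move=> Ha Hb. have [P [HP [E _]]] := crossXY Ha Hb. by rewrite (dist_tree lam' tree' HP). Qed.
Lemma dF2YX a b : ~~ inX a -> inX b -> d' (Some a) (Some b) = d a b + eps.
Proof. move=> Ha Hb. have [P [HP [E _]]] := crossYX Ha Hb. by rewrite (dist_tree lam' tree' HP). Qed.
Lemma dG1 a b : inX a -> ~~ inX b -> d a b = d a x + la + d y b.
Proof. move=> Ha Hb. by have [P [HP [_ E]]] := crossXY Ha Hb. Qed.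
Lemma dG2 a b : ~~ inX a -> inX b -> d a b = d a y + la + d x b.
Proof. move=> Ha Hb. by have [P [HP [_ E]]] := crossYX Ha Hb. Qed.
Lemma dF3X a : inX a -> d' (Some a) None = d a x + la.
Proof. move=> Ha. have [P [HP E]] := noneX Ha. by rewrite (dist_tree lam' tree' HP). Qed.
Lemma dF3Y a : ~~ inX a -> d' (Some a) None = d a y + eps.
Proof. move=> Ha. have [P [HP E]] := noneY Ha. by rewrite (dist_tree lam' tree' HP). Qed.
Lemma dtri a b c : d a c <= d a b + d b c.
Proof. exact: (dist_tri lpos Ht). Qed.
Lemma dself a : d a a = 0.
Proof. exact: dist_self. Qed.

Lemma forall_imset (k : nat) (T : finType) (f : 'I_k -> T) (P : pred T) :
  [forall s' in [set f j | j : 'I_k], P s'] = [forall j, P (f j)].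
Proof.
apply/forall_inP/forallP => H.
  move=> j. apply: H. by apply/imsetP; exists j.
move=> s' /imsetP [j _ ->]. exact: H.
Qed.

Lemma main k (U S : 'I_k -> {set V}) (i1 : 'I_k) (s : 'I_k -> V) :
  x \in Wset U i1 -> y \in U i1 :\: Wset U i1 -> is_solution e lam U S s ->
  is_solution e' lam' (exp_U e x y U i1) (exp_S S) (fun i => Some (s i)).
Proof.
move=> HxW HyU Hsol.
have memU : forall i z, (z \in U i) = [forall j, d (s i) z <= d (s j) z].
  move=> i z. rewrite (proj2 (Hsol i)) inE. exact: (forall_imset s (fun s' => d (s i) z <= d s' z)).
have Hx1 : x \in U i1 by move: HxW; rewrite /Wset inE => /andP [].
have Hxj : forall j, j != i1 -> x \notin U j.
  move=> j Hj. move: HxW; rewrite /Wset inE => /andP [Hn _].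
  apply/negP => Hxj; move/negP: Hn; apply. apply/bigcupP. by exists j.
have Hy1 : y \in U i1 by move: HyU; rewrite inE => /andP [].
have [m Hm Hym] : exists2 m, m != i1 & y \in U m.
  move: HyU; rewrite inE /Wset inE Hy1 andbT andbT negbK => /bigcupP [j Hj Hy]. by exists j.
have S1 : forall j, j != i1 -> d (s i1) x < d (s j) x.
  move=> j Hj. have := Hxj j Hj. rewrite memU negb_forall => /existsP [j' Hj'].
  move: Hx1. rewrite memU => /forallP /(_ j') H1. rewrite -ltNge in Hj'.
  exact: le_lt_trans H1 Hj'.
have la0 := la_pos. have He := Heps.
have S2 : inX (s i1).
  case Hs1 : (inX (s i1)) => //. exfalso.
  have := Hym; rewrite memU => /forallP /(_ i1) H1.
  have Ht1 := dtri (s m) y x.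
  have E1 : d y x = la by rewrite (dG2 yX xX) !dself addr0 add0r.
  have E2 : d (s i1) x = d (s i1) y + la by rewrite (dG2 (negbT Hs1) xX) dself addr0.
  have := S1 m Hm. lra.
have S3 : ~~ inX (s m).
  apply/negP => Hsm.
  have := Hy1; rewrite memU => /forallP /(_ m) H1.
  have := Hym; rewrite memU => /forallP /(_ i1) H2.
  have E1 : d (s m) y = d (s m) x + la by rewrite (dG1 Hsm yX) dself addr0.
  have E2 : d (s i1) y = d (s i1) x + la by rewrite (dG1 S2 yX) dself addr0.
  have := S1 m Hm. lra.
have S4 : d (s i1) y = d (s m) y.
  have := Hy1; rewrite memU => /forallP /(_ m) H1.
  have := Hym; rewrite memU => /forallP /(_ i1) H2.
  lra.
have Eq1 : d (s i1) y = d (s i1) x + la by rewrite (dG1 S2 yX) dself addr0.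
have S5 : forall j, d (s m) y <= d (s j) y.
  move=> j. by have := Hym; rewrite memU => /forallP /(_ j).
move=> i; split.
  rewrite /exp_S mem_imset //; last exact: Some_inj. exact: (proj1 (Hsol i)).
apply/setP => A. rewrite [RHS]inE (forall_imset (fun j => Some (s j)) (fun s' => d' (Some (s i)) A <= d' s' A)).
case: A => [z|]; last first.
  have KN : forall j, j != i1 -> d' (Some (s i1)) None < d' (Some (s j)) None.
    move=> j Hj. rewrite (dF3X S2). case Hsj : (inX (s j)).
      rewrite (dF3X Hsj). have := S1 j Hj. lra.
    rewrite (dF3Y (negbT Hsj)). have := S5 j. lra.
  have -> : (None \in exp_U e x y U i1 i) = (i == i1).
    rewrite /exp_U. case: eqP => _; first by rewrite in_setU1 eqxx.
    by apply/imsetP => -[].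
  case: eqP => [->|/eqP Hi].
    symmetry; apply/forallP => j. case: (eqVneq j i1) => [->//|Hj]. exact: ltW (KN j Hj).
  symmetry; apply/negP => /forallP /(_ i1). rewrite leNgt. by rewrite KN.
have memEU : (Some z \in exp_U e x y U i1 i) =
   if i == i1 then (z \in U i1) && inX z else z \in U i.
  rewrite /exp_U. case: eqP => _.
    by rewrite in_setU1 /= mem_imset ?inE //; exact: Some_inj.
  by rewrite mem_imset //; exact: Some_inj.
rewrite memEU.
case Hz : (inX z).
  rewrite andbT (_ : (if i == i1 then z \in U i1 else z \in U i) = (z \in U i)); last by case: eqP => [->|]. rewrite memU.
  have gE : forall j, d' (Some (s j)) (Some z) = d (s j) z + (if inX (s j) then 0 else eps).
    move=> j. case Hj : (inX (s j)).
      by rewrite (dF1X Hj Hz) addr0.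
    by rewrite (dF2YX (negbT Hj) Hz).
  have KX : forall j, ~~ inX (s j) -> d (s i1) z < d (s j) z.
    move=> j Hj. rewrite (dG2 Hj Hz). have := S5 j. have := dtri (s i1) x z. lra.
  apply/forallP/forallP => H j.
    have Hi1 := H i1. have Hj := H j.
    rewrite !gE. case Hsi : (inX (s i)); last first.
      have := KX i (negbT Hsi). lra.
    case Hsj : (inX (s j)); lra.
  have Hi1 := H i1. have Hj := H j. move: Hi1 Hj. rewrite !gE S2.
  case Hsi : (inX (s i)); last first.
    have := KX i (negbT Hsi). lra.
  case Hsj : (inX (s j)) => //=; first by lra.
  have := KX j (negbT Hsj). lra.
have Hz' : ~~ inX z by rewrite Hz.
rewrite andbF.
have gE : forall j, d' (Some (s j)) (Some z) = d (s j) z + (if inX (s j) then eps else 0).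
  move=> j. case Hj : (inX (s j)).
    by rewrite (dF2XY Hj Hz').
  by rewrite (dF1Y (negbT Hj) Hz') addr0.
have KY : forall j, inX (s j) -> d (s m) z <= d (s j) z.
  move=> j Hj. rewrite (dG1 Hj Hz'). have := dtri (s m) y z.
  have : d (s i1) x <= d (s j) x.
    case: (eqVneq j i1) => [->|Hji]; first exact: lexx.
    exact: ltW (S1 j Hji).
  lra.
have KY' : forall j, j != i1 -> inX (s j) -> d (s m) z < d (s j) z.
  move=> j Hji Hj. rewrite (dG1 Hj Hz'). have := dtri (s m) y z.
  have := S1 j Hji. lra.
case: eqP => [->|/eqP Hi].
  symmetry; apply/negP => /forallP /(_ m). rewrite !gE S2 (negbTE S3).
  have := KY i1 S2. lra.
rewrite memU. apply/forallP/forallP => H j.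
  have Hm2 := H m. move: Hm2.
  case Hsi : (inX (s i)).
    have := KY' i Hi Hsi. lra.
  have Hj := H j. rewrite !gE Hsi. case: (inX (s j)); lra.
have Hm' := H m. have Hj := H j. move: Hm' Hj. rewrite !gE (negbTE S3).
case Hsi : (inX (s i)).
  have := KY' i Hi Hsi. lra.
case Hsj : (inX (s j)) => /=; last by lra.
have := KY j Hsj. lra.
Qed.

End Spec.

Theorem lemma16 (R : realType) (V : finType) (e : rel V) (lam : V -> V -> R)
    (k : nat) (U S : 'I_k -> {set V}) (i1 : 'I_k) (x y : V) (eps : R)
    (s : 'I_k -> V) :
  is_tree e ->
  edge_lengths e lam ->
  covers U ->
  (forall i : 'I_k, S i \subset Wset U i) ->
  in_E e U i1 x y ->
  0 < eps ->
  is_solution e lam U S s ->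
  is_solution (exp_rel e x y) (exp_len lam x y eps) (exp_U e x y U i1) (exp_S S)
    (fun i => Some (s i)).
Proof.
move=> Ht Hl _ _ /and3P [Exy HxW HyU] He Hsol.
exact: (main Ht Hl Exy He HxW HyU Hsol).
Qed.
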